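(* Let $(L_i)_{i\in I}$ be a family of lattices with zero, pairwise intersecting in $\{0\}$, and let $L=\coprod^0_{i\in I}L_i$ with each $L_i$ identified with its canonical copy in $L$. For each $i$, let $\varepsilon_i\colon\operatorname{Id}L_i\to\operatorname{Id}L$, $X\mapsto L\mathbin{\downarrow}X=\{y\in L:(\exists x\in X)(y\le x)\}$. Let $\mathbf{p}$ be a lattice term with variables from $I\times\omega$ and let $\vec X=(X_{i,n})_{(i,n)\in I\times\omega}\in\prod_{(i,n)\in I\times\omega}\operatorname{Id}L_i$, and put $\vec\varepsilon\vec X=(\varepsilon_i(X_{i,n}))_{(i,n)\in I\times\omega}\in(\operatorname{Id}L)^{I\times\omega}$. Then, evaluating $\mathbf{p}$ in $\operatorname{Id}L$, $$\mathbf{p}(\vec\varepsilon\vec X)=L\mathbin{\downarrow}\{\mathbf{p}(\vec x): \vec x=(x_{i,n}),\ x_{i,n}\in X_{i,n}\text{ for all }(i,n)\in I\times\omega\},$$ where $\mathbf{p}(\vec x)$ is evaluated in $L$.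
   Context: $\coprod^0$ denotes the coproduct in the category of lattices with zero and zero-preserving homomorphisms; $\omega$ is the set of natural numbers. $\operatorname{Id}K$ is the lattice of all ideals (nonempty lower subsets closed under finite joins) of a lattice $K$, ordered by inclusion. *)

(* Defs.v *)
From HB Require Import structures.
From mathcomp Require Import all_boot all_order.
Set Implicit Arguments. Unset Strict Implicit. Unset Printing Implicit Defensive.
Import Order.TTheory.
Local Open Scope order_scope.

Inductive lterm (V : Type) : Type :=
| LVar of V
| LJoin of lterm V & lterm V
| LMeet of lterm V & lterm V.

Fixpoint leval (V : Type) (d : Order.disp_t) (K : latticeType d)
  (v : V -> K) (t : lterm V) : K :=
  match t with
  | LVar x => v x
  | LJoin a b => leval v a `|` leval v b
  | LMeet a b => leval v a `&` leval v b
  end.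

Definition is_ideal (d : Order.disp_t) (K : latticeType d) (A : K -> Prop) : Prop :=
  (exists x, A x) /\
  (forall x y : K, y <= x -> A x -> A y) /\
  (forall x y : K, A x -> A y -> A (x `|` y)).

Definition id_meet (d : Order.disp_t) (K : latticeType d) (A B : K -> Prop) : K -> Prop :=
  fun z => A z /\ B z.

Definition id_join (d : Order.disp_t) (K : latticeType d) (A B : K -> Prop) : K -> Prop :=
  fun z => forall J : K -> Prop, is_ideal J ->
    (forall x, A x -> J x) -> (forall x, B x -> J x) -> J z.

Fixpoint ideval (V : Type) (d : Order.disp_t) (K : latticeType d)
  (v : V -> (K -> Prop)) (t : lterm V) : K -> Prop :=
  match t with
  | LVar x => v x
  | LJoin a b => id_join (ideval v a) (ideval v b)
  | LMeet a b => id_meet (ideval v a) (ideval v b)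
  end.

Definition downset (d : Order.disp_t) (K : latticeType d) (S : K -> Prop) : K -> Prop :=
  fun y => exists x, S x /\ y <= x.

Definition is_hom0 (d1 d2 : Order.disp_t) (K1 : bLatticeType d1) (K2 : bLatticeType d2)
  (f : K1 -> K2) : Prop :=
  f \bot = \bot /\
  (forall x y, f (x `|` y) = f x `|` f y) /\
  (forall x y, f (x `&` y) = f x `&` f y).

Definition is_coproduct0 (I : Type) (d : I -> Order.disp_t)
  (Li : forall i, bLatticeType (d i)) (dL : Order.disp_t) (L : bLatticeType dL)
  (e : forall i, Li i -> L) : Prop :=
  (forall i, is_hom0 (e i)) /\
  forall (dK : Order.disp_t) (K : bLatticeType dK) (f : forall i, Li i -> K),
    (forall i, is_hom0 (f i)) ->
    exists h : L -> K,
      [/\ is_hom0 h,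
          (forall i x, h (e i x) = f i x) &
          (forall h' : L -> K, is_hom0 h' -> (forall i x, h' (e i x) = f i x) ->
             forall y, h' y = h y)].

(* epsilon_i : Id L_i -> Id L, X |-> L ↓ X (X identified with its copy in L). *)
Definition eps (I : Type) (d : I -> Order.disp_t)
  (Li : forall i, bLatticeType (d i)) (dL : Order.disp_t) (L : bLatticeType dL)
  (e : forall i, Li i -> L) (i : I) (X : Li i -> Prop) : L -> Prop :=
  downset (fun y => exists2 x, X x & y = e i x).

(* Main.v *)
Require Import Defs.
From HB Require Import structures.
From mathcomp Require Import all_boot all_order.
From Stdlib Require Import ClassicalEpsilon FunctionalExtensionality PropExtensionality Eqdep.
Import Order.TTheory.
Local Open Scope order_scope.

Theorem lemma5p1 (I : Type) (d : I -> Order.disp_t)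
  (Li : forall i, bLatticeType (d i)) (dL : Order.disp_t) (L : bLatticeType dL)
  (e : forall i, Li i -> L) (He : @is_coproduct0 I d Li dL L e)
  (p : lterm (I * nat)) (X : forall i : I, nat -> Li i -> Prop)
  (HX : forall i n, is_ideal (X i n)) :
  ideval (fun v : I * nat => eps e (X v.1 v.2)) p =
  downset (fun y : L => exists x : forall i : I, nat -> Li i,
             (forall i n, X i n (x i n)) /\
             y = leval (fun v : I * nat => e v.1 (x v.1 v.2)) p).
Proof.
have emono : forall i (a b : Li i), a <= b -> e i a <= e i b.
  move=> i a b /join_idPr <-; have [_ [-> _]] := (He.1 i); exact: leUl.
set ev := fun (x : forall i : I, nat -> Li i) t =>
  leval (fun v : I * nat => e v.1 (x v.1 v.2)) t.
have mono : forall (x x' : forall i : I, nat -> Li i),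
   (forall i n, x i n <= x' i n) -> forall t, ev x t <= ev x' t.
  move=> x x' H; elim=> [v|a IHa b IHb|a IHa b IHb] /=.
  - exact: emono.
  - exact: leU2.
  - exact: leI2.
have dir : forall (x x' : forall i : I, nat -> Li i),
   (forall i n, X i n (x i n)) -> (forall i n, X i n (x' i n)) ->
   exists w : forall i : I, nat -> Li i, (forall i n, X i n (w i n)) /\
     (forall t, ev x t <= ev w t) /\ (forall t, ev x' t <= ev w t).
  move=> x x' Hx Hx'; exists (fun i n => x i n `|` x' i n); split.
    by move=> i n; apply: (HX i n).2.2.
  by split=> t; apply: mono => i n; [exact: leUl | exact: leUr].
set D := fun t => downset (fun y : L => exists x : forall i : I, nat -> Li i,
             (forall i n, X i n (x i n)) /\ y = ev x t).
have ex0 : exists x : forall i : I, nat -> Li i, forall i n, X i n (x i n).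
  exists (fun i n => proj1_sig (constructive_indefinite_description _ (HX i n).1)).
  by move=> i n; exact: proj2_sig (constructive_indefinite_description _ (HX i n).1).
have Dideal : forall t, is_ideal (D t).
  move=> t; split; last split.
  - have [x Hx] := ex0; exists (ev x t); exists (ev x t); split => //; by exists x.
  - move=> a b ba [c [Hc ac]]; exists c; split => //; exact: le_trans ba ac.
  - move=> a b [c [[x [Hx ->]] ac]] [c' [[x' [Hx' ->]] bc']].
    have [w [Hw [H1 H2]]] := dir x x' Hx Hx'.
    exists (ev w t); split; first by exists w.
    apply: (le_trans (leU2 ac bc')); rewrite leUx; apply/andP; split; [exact: H1|exact: H2].
suff key : forall t z, ideval (fun v : I * nat => eps e (X v.1 v.2)) t z <-> D t z.
  apply: functional_extensionality => z; apply: propositional_extensionality; exact: key.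
elim=> [[i n]|a IHa b IHb|a IHa b IHb] z /=.
- split.
  + move=> [y [[x0 Hx0 ->] zy]].
    have Hup : forall j m, exists y : Li j, X j m y /\
        (forall H : i = j, m = n -> eq_rect i Li x0 j H <= y).
      move=> j m; case: (classic (i = j /\ m = n)) => [[Hij Hmn]|Hn].
        subst j m; exists x0; split => // H _; by rewrite -eq_rect_eq.
      have [y0 Hy0] := (HX j m).1; exists y0; split => // H Hm; by case: Hn.
    pose x := fun j m => proj1_sig (constructive_indefinite_description _ (Hup j m)).
    have Hx := fun j m => proj2_sig (constructive_indefinite_description _ (Hup j m)).
    exists (ev x (LVar (i, n))); split; first by exists x; split => // j m; case: (Hx j m).
    apply: (le_trans zy); rewrite /ev /=; apply: emono.
    by have [_ H] := Hx i n; have := H erefl erefl.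
  + move=> [y [[x [Hx ->]] zy]]; exists (e i (x i n)); split => //.
    by exists (x i n).
- split.
  + move=> H; apply: H; first exact: Dideal.
    * move=> y /IHa [c [[x [Hx ->]] yc]]; exists (ev x (LJoin a b)); split; first by exists x.
      apply: (le_trans yc); exact: leUl.
    * move=> y /IHb [c [[x [Hx ->]] yc]]; exists (ev x (LJoin a b)); split; first by exists x.
      apply: (le_trans yc); exact: leUr.
  + move=> [c [[x [Hx ->]] zc]] J HJ HA HB.
    apply: (HJ.2.1 _ _ zc); apply: HJ.2.2.
    * apply: HA; apply/IHa; exists (ev x a); split => //; by exists x.
    * apply: HB; apply/IHb; exists (ev x b); split => //; by exists x.
- rewrite /id_meet; split.
  + move=> [/IHa [c [[x [Hx ->]] zc]] /IHb [c' [[x' [Hx' ->]] zc']]].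
    have [w [Hw [H1 H2]]] := dir x x' Hx Hx'.
    exists (ev w (LMeet a b)); split; first by exists w.
    rewrite /= lexI; apply/andP; split.
      exact: le_trans zc (H1 a).
    exact: le_trans zc' (H2 b).
  + move=> [c [[x [Hx ->]] zc]]; split.
    * apply/IHa; exists (ev x a); split; first by exists x.
      exact: le_trans zc (leIl _ _).
    * apply/IHb; exists (ev x b); split; first by exists x.
      exact: le_trans zc (leIr _ _).
Qed.
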